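(* Let $(c_n)_{n\in\mathbb{Z}}$ be real numbers with $\sum_{n\in\mathbb{Z}}n^2c_n^2<\infty$, and for $j\in\{0,1,2\}$ let $g_j(\theta)=\sum_{n\in\mathbb{Z}}n^jc_n^2e^{in\theta}$, $g=g_0$. Then for every $\theta\in\mathbb{R}$, \[ |g(0)g_1(\theta)-g_1(0)g(\theta)|^2\le\left(g(0)g_2(0)-g_1^2(0)\right)\left(g^2(0)-|g(\theta)|^2\right). \] *)

(* Defs.v *)
From Stdlib Require Import Reals ZArith.
From Coquelicot Require Import Coquelicot.
Open Scope R_scope.

Definition zsum (f : Z -> R) : R :=
  Series (fun k : nat => f (Z.of_nat k)) + Series (fun k : nat => f (- Z.of_nat (S k))%Z).

Definition zsummable (f : Z -> R) : Prop :=
  ex_series (fun k : nat => Rabs (f (Z.of_nat k))) /\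
  ex_series (fun k : nat => Rabs (f (- Z.of_nat (S k))%Z)).

(* g_j(theta) = sum_n n^j c_n^2 e^{i n theta}, with e^{ix} = cos x + i sin x. *)
Definition gj (c : Z -> R) (j : nat) (theta : R) : C :=
  (zsum (fun n => IZR n ^ j * c n ^ 2 * cos (IZR n * theta)),
   zsum (fun n => IZR n ^ j * c n ^ 2 * sin (IZR n * theta))).

(* Main.v *)
Require Import Defs.
From Stdlib Require Import Reals ZArith Lra Psatz.
From Coquelicot Require Import Coquelicot.
Open Scope R_scope.

Definition zex (f : Z -> R) : Prop :=
  ex_series (fun k : nat => f (Z.of_nat k)) /\
  ex_series (fun k : nat => f (- Z.of_nat (S k))%Z).

Lemma zsum_ext f g : (forall n, f n = g n) -> zsum f = zsum g.
Proof. intros H; unfold zsum; f_equal; apply Series_ext; auto. Qed.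

Lemma zex_lin a f g : zex f -> zex g -> zex (fun n => a * f n + g n).
Proof.
  intros [F1 F2] [G1 G2]; split.
  - apply (ex_series_plus (fun k => a * f (Z.of_nat k)) (fun k => g (Z.of_nat k))); auto.
    apply (ex_series_scal_l a (fun k => f (Z.of_nat k))); auto.
  - apply (ex_series_plus (fun k => a * f (- Z.of_nat (S k))%Z) (fun k => g (- Z.of_nat (S k))%Z)); auto.
    apply (ex_series_scal_l a (fun k => f (- Z.of_nat (S k))%Z)); auto.
Qed.

Lemma zex_scal a f : zex f -> zex (fun n => a * f n).
Proof.
  intros [F1 F2]; split.
  apply (ex_series_scal_l a (fun k => f (Z.of_nat k))); auto.
  apply (ex_series_scal_l a (fun k => f (- Z.of_nat (S k))%Z)); auto.
Qed.

Lemma zsum_lin a f g : zex f -> zex g -> zsum (fun n => a * f n + g n) = a * zsum f + zsum g.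
Proof.
  intros [F1 F2] [G1 G2]; unfold zsum.
  rewrite (Series_plus (fun k => a * f (Z.of_nat k)) (fun k => g (Z.of_nat k))).
  rewrite (Series_plus (fun k => a * f (- Z.of_nat (S k))%Z) (fun k => g (- Z.of_nat (S k))%Z)).
  rewrite !Series_scal_l; ring.
  apply (ex_series_scal_l a (fun k => f (- Z.of_nat (S k))%Z)); auto. auto.
  apply (ex_series_scal_l a (fun k => f (Z.of_nat k))); auto. auto.
Qed.

Lemma zsum_scal a f : zsum (fun n => a * f n) = a * zsum f.
Proof. unfold zsum; rewrite !Series_scal_l; ring. Qed.

Lemma zsum_ge0 f : zex f -> (forall n, 0 <= f n) -> 0 <= zsum f.
Proof.
  intros [F1 F2] H; unfold zsum.
  assert (0 <= Series (fun k => f (Z.of_nat k))).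
  { replace 0 with (0 * Series (fun k => f (Z.of_nat k))) by ring.
    rewrite <- Series_scal_l. apply Series_le; auto. intros n; rewrite Rmult_0_l; split; [lra|auto]. }
  assert (0 <= Series (fun k => f (- Z.of_nat (S k))%Z)).
  { replace 0 with (0 * Series (fun k => f (- Z.of_nat (S k))%Z)) by ring.
    rewrite <- Series_scal_l. apply Series_le; auto. intros n; rewrite Rmult_0_l; split; [lra|auto]. }
  lra.
Qed.

Lemma exle (a b : nat -> R) : (forall n, Rabs (a n) <= b n) -> ex_series b -> ex_series a.
Proof. intros H E; apply (@ex_series_le R_AbsRing R_CompleteNormedModule a b); auto. Qed.

Lemma zex_dom (c : Z -> R) (hc : zsummable (fun n => IZR n ^ 2 * c n ^ 2)) f :
  (forall n, Rabs (f n) <= c n ^ 2 + IZR n ^ 2 * c n ^ 2) -> zex f.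
Proof.
  intros Hf. destruct hc as [H1 H2].
  assert (E1 : ex_series (fun k : nat => IZR (Z.of_nat k) ^ 2 * c (Z.of_nat k) ^ 2)).
  { apply (exle _ (fun k : nat => Rabs (IZR (Z.of_nat k) ^ 2 * c (Z.of_nat k) ^ 2))); auto.
    intros; apply Rle_refl. }
  assert (E2 : ex_series (fun k : nat => IZR (- Z.of_nat (S k)) ^ 2 * c (- Z.of_nat (S k))%Z ^ 2)).
  { apply (exle _ (fun k : nat => Rabs (IZR (- Z.of_nat (S k)) ^ 2 * c (- Z.of_nat (S k))%Z ^ 2))); auto.
    intros; apply Rle_refl. }
  assert (W1 : ex_series (fun k : nat => c (Z.of_nat k) ^ 2)).
  { apply ex_series_incr_1.
    apply (exle _ (fun k : nat => IZR (Z.of_nat (S k)) ^ 2 * c (Z.of_nat (S k)) ^ 2)).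
    - intros k. change (Rabs (c (Z.of_nat (S k)) ^ 2)) with (Rabs (c (Z.of_nat (S k)) ^ 2)).
      rewrite Rabs_pos_eq by nra. rewrite <- INR_IZR_INZ, S_INR.
      pose proof (pos_INR k). nra.
    - apply (proj1 (ex_series_incr_1 (fun k : nat => IZR (Z.of_nat k) ^ 2 * c (Z.of_nat k) ^ 2))); auto. }
  assert (W2 : ex_series (fun k : nat => c (- Z.of_nat (S k))%Z ^ 2)).
  { apply (exle _ (fun k : nat => IZR (- Z.of_nat (S k)) ^ 2 * c (- Z.of_nat (S k))%Z ^ 2)); auto.
    intros k. change (Rabs (c (- Z.of_nat (S k))%Z ^ 2)) with (Rabs (c (- Z.of_nat (S k))%Z ^ 2)).
    rewrite Rabs_pos_eq by nra. rewrite opp_IZR, <- INR_IZR_INZ, S_INR.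
    pose proof (pos_INR k). nra. }
  split.
  - apply (exle _ (fun k : nat => c (Z.of_nat k) ^ 2 + IZR (Z.of_nat k) ^ 2 * c (Z.of_nat k) ^ 2)).
    intros; apply Hf. apply (ex_series_plus (fun k : nat => c (Z.of_nat k) ^ 2)); auto.
  - apply (exle _ (fun k : nat => c (- Z.of_nat (S k))%Z ^ 2 + IZR (- Z.of_nat (S k)) ^ 2 * c (- Z.of_nat (S k))%Z ^ 2)).
    intros; apply Hf. apply (ex_series_plus (fun k : nat => c (- Z.of_nat (S k))%Z ^ 2)); auto.
Qed.
Definition ph1 (c : Z -> R) n := c n ^ 2.
Definition ph2 (c : Z -> R) n := IZR n * c n ^ 2.
Definition ph3 (c : Z -> R) n := IZR n ^ 2 * c n ^ 2.
Definition ph4 (c : Z -> R) th n := c n ^ 2 * cos (IZR n * th).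
Definition ph5 (c : Z -> R) th n := c n ^ 2 * sin (IZR n * th).
Definition ph6 (c : Z -> R) th n := IZR n * c n ^ 2 * cos (IZR n * th).
Definition ph7 (c : Z -> R) th n := IZR n * c n ^ 2 * sin (IZR n * th).

Definition L7 c th c1 c2 c3 c4 c5 c6 c7 n :=
  c1 * ph1 c n + (c2 * ph2 c n + (c3 * ph3 c n + (c4 * ph4 c th n +
  (c5 * ph5 c th n + (c6 * ph6 c th n + c7 * ph7 c th n))))).


Lemma bnd_aux (N C s : R) : 0 <= C -> -1 <= s -> s <= 1 -> Rabs (N * C * s) <= C + N ^ 2 * C.
Proof.
  intros HC Hs Hs'.
  assert (0 <= 1 + N^2 - N*s) by (pose proof (pow2_ge_0 (N - s/2)); nra).
  assert (0 <= 1 + N^2 + N*s) by (pose proof (pow2_ge_0 (N + s/2)); nra).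
  apply Rabs_le. split; nra.
Qed.

Lemma zex1 (c : Z -> R) (hc : zsummable (fun n => IZR n ^ 2 * c n ^ 2)) : zex (ph1 c).
Proof. apply (zex_dom c hc). intros n; unfold ph1. rewrite Rabs_pos_eq by nra. nra. Qed.
Lemma zex2 (c : Z -> R) (hc : zsummable (fun n => IZR n ^ 2 * c n ^ 2)) : zex (ph2 c).
Proof. apply (zex_dom c hc). intros n; unfold ph2.
  replace (IZR n * c n ^ 2) with (IZR n * c n ^ 2 * 1) by ring. apply bnd_aux; nra. Qed.
Lemma zex3 (c : Z -> R) (hc : zsummable (fun n => IZR n ^ 2 * c n ^ 2)) : zex (ph3 c).
Proof. apply (zex_dom c hc). intros n; unfold ph3. rewrite Rabs_pos_eq by nra. nra. Qed.
Lemma zex4 (c : Z -> R) (hc : zsummable (fun n => IZR n ^ 2 * c n ^ 2)) (th : R) : zex (ph4 c th).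
Proof. apply (zex_dom c hc). intros n; unfold ph4.
  pose proof (COS_bound (IZR n * th)). assert (0 <= c n ^ 2) by nra. assert (0 <= IZR n ^ 2 * c n ^ 2) by nra. apply Rabs_le; split; nra. Qed.
Lemma zex5 (c : Z -> R) (hc : zsummable (fun n => IZR n ^ 2 * c n ^ 2)) (th : R) : zex (ph5 c th).
Proof. apply (zex_dom c hc). intros n; unfold ph5.
  pose proof (SIN_bound (IZR n * th)). assert (0 <= c n ^ 2) by nra. assert (0 <= IZR n ^ 2 * c n ^ 2) by nra. apply Rabs_le; split; nra. Qed.
Lemma zex6 (c : Z -> R) (hc : zsummable (fun n => IZR n ^ 2 * c n ^ 2)) (th : R) : zex (ph6 c th).
Proof. apply (zex_dom c hc). intros n; unfold ph6.
  pose proof (COS_bound (IZR n * th)). apply bnd_aux; nra. Qed.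
Lemma zex7 (c : Z -> R) (hc : zsummable (fun n => IZR n ^ 2 * c n ^ 2)) (th : R) : zex (ph7 c th).
Proof. apply (zex_dom c hc). intros n; unfold ph7.
  pose proof (SIN_bound (IZR n * th)). apply bnd_aux; nra. Qed.

Lemma lin7 (c : Z -> R) (hc : zsummable (fun n => IZR n ^ 2 * c n ^ 2)) (th : R) c1 c2 c3 c4 c5 c6 c7 :
  zex (L7 c th c1 c2 c3 c4 c5 c6 c7) /\
  zsum (L7 c th c1 c2 c3 c4 c5 c6 c7) =
  c1 * zsum (ph1 c) + c2 * zsum (ph2 c) + c3 * zsum (ph3 c) + c4 * zsum (ph4 c th)
  + c5 * zsum (ph5 c th) + c6 * zsum (ph6 c th) + c7 * zsum (ph7 c th).
Proof.
  pose proof (zex1 c hc). pose proof (zex2 c hc). pose proof (zex3 c hc). pose proof (zex4 c hc th).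
  pose proof (zex5 c hc th). pose proof (zex6 c hc th). pose proof (zex7 c hc th).
  unfold L7. split.
  - repeat (apply zex_lin; auto). apply zex_scal; auto.
  - repeat (rewrite zsum_lin; [| auto | repeat (apply zex_lin; auto); apply zex_scal; auto]).
    rewrite zsum_scal. ring.
Qed.


Lemma disc (a b c0 : R) : 0 <= a -> (forall t, 0 <= a * t^2 - 2 * b * t + c0) -> b^2 <= a * c0.
Proof.
  intros Ha H. destruct (Req_dec a 0) as [Ha0|Ha0].
  - subst a. destruct (Req_dec b 0) as [Hb|Hb].
    + subst b. nra.
    + specialize (H ((c0 + 1) / (2 * b))).
      replace (0 * ((c0 + 1) / (2 * b)) ^ 2 - 2 * b * ((c0 + 1) / (2 * b)) + c0) with (-1) in H by (field; auto). lra.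
  - specialize (H (b / a)).
    replace (a * (b / a) ^ 2 - 2 * b * (b / a) + c0) with ((a * c0 - b^2) / a) in H by (field; auto).
    assert (0 < a) by lra.
    assert (0 <= (a * c0 - b^2)) by (apply (Rmult_le_reg_r (/ a)); [apply Rinv_0_lt_compat; lra| rewrite Rmult_0_l; exact H]).
    lra.
Qed.

Theorem claim5p2 (c : Z -> R)
  (hc : zsummable (fun n => IZR n ^ 2 * c n ^ 2)) (theta : R) :
  Cmod (Cminus (Cmult (gj c 0 0) (gj c 1 theta)) (Cmult (gj c 1 0) (gj c 0 theta))) ^ 2
  <= Re (Cminus (Cmult (gj c 0 0) (gj c 2 0)) (Cmult (gj c 1 0) (gj c 1 0)))
     * (Re (Cmult (gj c 0 0) (gj c 0 0)) - Cmod (gj c 0 theta) ^ 2).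
Proof.
  set (A := zsum (ph1 c)). set (B := zsum (ph2 c)). set (D := zsum (ph3 c)).
  set (G1 := zsum (ph4 c theta)). set (G2 := zsum (ph5 c theta)).
  set (H1 := zsum (ph6 c theta)). set (H2 := zsum (ph7 c theta)).
  assert (E00 : gj c 0 0 = (A, 0)).
  { unfold gj; f_equal.
    - apply zsum_ext; intros n; unfold ph1; replace (IZR n * 0) with 0 by ring; rewrite cos_0; ring.
    - transitivity (0 * A); [| ring]. unfold A; rewrite <- zsum_scal.
      apply zsum_ext; intros n; unfold ph1; replace (IZR n * 0) with 0 by ring; rewrite sin_0; ring. }
  assert (E10 : gj c 1 0 = (B, 0)).
  { unfold gj; f_equal.
    - apply zsum_ext; intros n; unfold ph2; replace (IZR n * 0) with 0 by ring; rewrite cos_0; ring.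
    - transitivity (0 * A); [| ring]. unfold A; rewrite <- zsum_scal.
      apply zsum_ext; intros n; unfold ph1; replace (IZR n * 0) with 0 by ring; rewrite sin_0; ring. }
  assert (E20 : gj c 2 0 = (D, 0)).
  { unfold gj; f_equal.
    - apply zsum_ext; intros n; unfold ph3; replace (IZR n * 0) with 0 by ring; rewrite cos_0; ring.
    - transitivity (0 * A); [| ring]. unfold A; rewrite <- zsum_scal.
      apply zsum_ext; intros n; unfold ph1; replace (IZR n * 0) with 0 by ring; rewrite sin_0; ring. }
  assert (E0t : gj c 0 theta = (G1, G2)).
  { unfold gj; f_equal; apply zsum_ext; intros n; unfold ph4, ph5; ring. }
  assert (E1t : gj c 1 theta = (H1, H2)).
  { unfold gj; f_equal; apply zsum_ext; intros n; unfold ph6, ph7; ring. }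
  rewrite E00, E10, E20, E0t, E1t.
  unfold Cmod, Cminus, Cmult, Copp, Cplus, Re; cbn [fst snd].
  rewrite !pow2_sqrt by (apply Rplus_le_le_0_compat; apply pow2_ge_0).
  assert (HA : 0 <= A).
  { destruct (lin7 c hc theta 1 0 0 0 0 0 0) as [Z1 Z2].
    replace A with (zsum (L7 c theta 1 0 0 0 0 0 0)) by (rewrite Z2; unfold A; ring).
    apply zsum_ge0; auto. intros n; unfold L7, ph1, ph2, ph3, ph4, ph5, ph6, ph7. nra. }
  assert (Q1 : forall t, 0 <= A * t^2 - 2 * B * t + D).
  { intros t. destruct (lin7 c hc theta (t^2) (-2*t) 1 0 0 0 0) as [Z1 Z2].
    replace (A * t^2 - 2 * B * t + D) with (zsum (L7 c theta (t^2) (-2*t) 1 0 0 0 0)) by (rewrite Z2; unfold A, B, D; ring).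
    apply zsum_ge0; auto. intros n; unfold L7, ph1, ph2, ph3, ph4, ph5, ph6, ph7.
    replace (t ^ 2 * c n ^ 2 + (-2 * t * (IZR n * c n ^ 2) + (1 * (IZR n ^ 2 * c n ^ 2) + (0 * (c n ^ 2 * cos (IZR n * theta)) + (0 * (c n ^ 2 * sin (IZR n * theta)) + (0 * (IZR n * c n ^ 2 * cos (IZR n * theta)) + 0 * (IZR n * c n ^ 2 * sin (IZR n * theta))))))))
      with (c n ^ 2 * (t - IZR n)^2) by ring. apply Rmult_le_pos; apply pow2_ge_0. }
  assert (QM : 0 <= A * (A^2 - G1^2 - G2^2)).
  { destruct (lin7 c hc theta (A^2 + G1^2 + G2^2) 0 0 (-2*A*G1) (-2*A*G2) 0 0) as [Z1 Z2].
    replace (A * (A^2 - G1^2 - G2^2)) with (zsum (L7 c theta (A^2 + G1^2 + G2^2) 0 0 (-2*A*G1) (-2*A*G2) 0 0)) by (rewrite Z2; fold A B D G1 G2 H1 H2; ring).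
    apply zsum_ge0; auto. intros n; unfold L7, ph1, ph2, ph3, ph4, ph5, ph6, ph7.
    set (co := cos (IZR n * theta)). set (si := sin (IZR n * theta)).
    assert (Hsc : si^2 + co^2 = 1) by (unfold si, co; rewrite <- !Rsqr_pow2; apply sin2_cos2).
    set (w := c n ^ 2). assert (0 <= w) by (unfold w; nra).
    match goal with |- 0 <= ?e => replace e with (w * ((A*co - G1)^2 + (A*si - G2)^2) + A^2 * w * (1 - (si^2 + co^2))) by ring end.
    rewrite Hsc. replace (1 - 1) with 0 by ring. rewrite Rmult_0_r, Rplus_0_r.
    apply Rmult_le_pos; [auto | apply Rplus_le_le_0_compat; apply pow2_ge_0]. }
  set (X := A * H1 - B * G1). set (Y := A * H2 - B * G2).
  set (S2 := X^2 + Y^2). set (E0 := X * G1 + Y * G2).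
  assert (Q2 : forall t, 0 <= (A * (A * D - B^2)) * t^2 - 2 * (A * S2) * t + S2 * (A * (A^2 - G1^2 - G2^2))).
  { intros t.
    destruct (lin7 c hc theta (t^2*B^2 - 2*t*B*E0 + S2*(A^2+G1^2+G2^2))
       (-2*t^2*A*B + 2*t*A*E0) (t^2*A^2) (2*t*A*B*X - 2*A*G1*S2) (2*t*A*B*Y - 2*A*G2*S2)
       (-2*t*A^2*X) (-2*t*A^2*Y)) as [Z1 Z2].
    match goal with |- 0 <= ?e => replace e with (zsum (L7 c theta (t^2*B^2 - 2*t*B*E0 + S2*(A^2+G1^2+G2^2))
       (-2*t^2*A*B + 2*t*A*E0) (t^2*A^2) (2*t*A*B*X - 2*A*G1*S2) (2*t*A*B*Y - 2*A*G2*S2)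
       (-2*t*A^2*X) (-2*t*A^2*Y))) end.
    2: { rewrite Z2; fold A B D G1 G2 H1 H2. unfold S2, E0, X, Y. ring. }
    apply zsum_ge0; auto. intros n; unfold L7, ph1, ph2, ph3, ph4, ph5, ph6, ph7.
    set (co := cos (IZR n * theta)). set (si := sin (IZR n * theta)).
    assert (Hsc : si^2 + co^2 = 1) by (unfold si, co; rewrite <- !Rsqr_pow2; apply sin2_cos2).
    set (w := c n ^ 2). assert (0 <= w) by (unfold w; nra).
    set (N := IZR n).
    match goal with |- 0 <= ?e => replace e with
      (w * (t * (A*N - B) - (X * (A*co - G1) + Y * (A*si - G2)))^2
       + w * (X * (A*si - G2) - Y * (A*co - G1))^2 + S2 * A^2 * w * (1 - (si^2 + co^2))) by (unfold S2, E0; ring) end.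
    rewrite Hsc. replace (1 - 1) with 0 by ring. rewrite Rmult_0_r, Rplus_0_r.
    apply Rplus_le_le_0_compat; apply Rmult_le_pos; auto; apply pow2_ge_0. }
  match goal with |- ?l <= ?r => replace l with S2 by (unfold S2, X, Y; ring);
     replace r with ((A * D - B^2) * (A^2 - G1^2 - G2^2)) by ring end.
  pose proof (disc _ _ _ HA Q1) as HB.
  destruct (Req_dec A 0) as [HA0|HA0].
  - assert (B = 0) by (rewrite HA0 in HB; nra).
    unfold S2, X, Y. rewrite HA0, H. nra.
  - assert (HApos : 0 < A) by lra.
    assert (HK : 0 <= A * (A * D - B^2)) by nra.
    pose proof (disc _ _ _ HK Q2) as HQ.
    assert (HM : 0 <= A^2 - G1^2 - G2^2).
    { apply (Rmult_le_reg_l A); [lra|]. rewrite Rmult_0_r. exact QM. }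
    assert (HS : 0 <= S2) by (unfold S2; nra).
    destruct (Req_dec S2 0) as [HS0|HS0].
    + rewrite HS0. apply Rmult_le_pos; nra.
    + assert (0 < A^2 * S2) by (apply Rmult_lt_0_compat; nra).
      apply (Rmult_le_reg_l (A^2 * S2)); [assumption|].
      replace (A^2 * S2 * S2) with ((A * S2)^2) by ring.
      eapply Rle_trans; [exact HQ|]. right; ring.
Qed.
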